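(* Consider the multiobjective optimal control setting, Assumption A and Algorithm 1 described in the context, and let $x_0\in\mathbb{X}_N$. Then every closed-loop trajectory $x(\cdot)=x_\mu(\cdot,x_0)$ driven by the feedback $\mu^N$ from Algorithm 1 converges to the equilibrium $x^e$, and $\widetilde{\ell}_1(x(k),\mu^N(k,x(k)))\to0$ as $k\to\infty$.
   Context: Let $f:\mathbb{R}^n\times\mathbb{R}^m\to\mathbb{R}^n$ be continuous and consider $x(k+1)=f(x(k),u(k))$, $x(0)=x_0$; $x_{\mathbf{u}}(k,x_0)$ denotes the solution for control sequence $\mathbf u$. Let $\mathbb{X}\subseteq\mathbb{R}^n$, $\mathbb{U}\subseteq\mathbb{R}^m$, $\mathbb{X}_0\subseteq\mathbb{X}$ be nonempty; horizons $N\ge2$, objectives $s\ge2$. $\mathbb{U}^N(x_0)$ is the set of $\mathbf{u}\in\mathbb{U}^N$ with $x_{\mathbf{u}}(k,x_0)\in\mathbb{X}$ for $k=1,\dots,N-1$ and $x_{\mathbf{u}}(N,x_0)\in\mathbb{X}_0$; $\mathbb{X}_N=\{x_0\in\mathbb{X}:\mathbb{U}^N(x_0)\neq\emptyset\}$. With stage costs $\ell_i:\mathbb{X}\times\mathbb{U}\to\mathbb{R}$ ($i=1,\dots,s$) and continuous $F_1:\mathbb{X}_0\to\mathbb{R}_{\ge0}$: $J_1^N(x_0,\mathbf{u})=\sum_{k=0}^{N-1}\ell_1(x_{\mathbf{u}}(k,x_0),u(k))+F_1(x_{\mathbf{u}}(N,x_0))$, $J_i^N(x_0,\mathbf{u})=\sum_{k=0}^{N-1}\ell_i(x_{\mathbf{u}}(k,x_0),u(k))$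 for $i\ge2$. $\mathbf{u}^\star\in\mathbb{U}^N(x_0)$ is efficient if no $\mathbf{u}\in\mathbb{U}^N(x_0)$ satisfies $J_i^N(x_0,\mathbf{u})\le J_i^N(x_0,\mathbf{u}^\star)$ for all $i$ with strict inequality for some $i$; $\mathbb{U}^N_{\mathcal P}(x_0)$ denotes the efficient set. $\mathcal{J}^N(x_0)$ is the set of vectors $(J_i^N(x_0,\mathbf u))_{i=1}^s$, $\mathbf u\in\mathbb{U}^N(x_0)$, and $\mathcal{J}^N_{\mathcal P}(x_0)$ the subset for efficient $\mathbf u$; external stability means every $y\in\mathcal{J}^N(x_0)$ dominates componentwise some $y_{\mathcal P}\in\mathcal{J}^N_{\mathcal P}(x_0)$. $\mathcal K_\infty$: continuous strictly increasing unbounded functions $\mathbb{R}_{\ge0}\to\mathbb{R}_{\ge0}$ vanishing at $0$. Assumption A: (i) $(x^e,u^e)\in\mathbb{X}\times\mathbb{U}$ with $f(x^e,u^e)=x^e$; (ii) $\lambda_1:\mathbb{X}\to\mathbb{R}$ bounded below, $\lambda_1(x^e)=0$, $\alpha_{\ell,1}\in\mathcal K_\infty$ with $\ell_1(x,u)-\ell_1(x^e,u^e)+\lambda_1(x)-\lambda_1(f(x,u))\ge\alpha_{\ell,1}(\|x-x^e\|+\|u-u^e\|)$ on $\mathbb{X}\times\mathbb{U}$; (iii) all $\ell_i$ continuous; (iv) $x^e\in\mathbb{X}_0$ and $\kappa:\mathbb{X}_0\to\mathbb{U}$ with $f(x,\kappa(x))\in\mathbb{X}_0$ and $F_1(f(x,\kappa(x)))+\ell_1(x,\kappa(x))\le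 F_1(x)+\ell_1(x^e,u^e)$ for all $x\in\mathbb{X}_0$; (v) $\mathcal{J}^N_{\mathcal P}(x)$ externally stable for $\mathcal{J}^N(x)$ for all $x\in\mathbb{X}_N$. Algorithm 1 ($k\in\mathbb N_0$): $x(0)=x_0$, choose any $\mathbf{u}^\star_{x(0)}\in\mathbb{U}^N_{\mathcal P}(x(0))$; for $k\ge1$ choose $\mathbf{u}^\star_{x(k)}\in\mathbb{U}^N_{\mathcal P}(x(k))$ with $J_1^N(x(k),\mathbf{u}^\star_{x(k)})\le J_1^N(x(k),\mathbf{u}_{x(k)})$, where $\mathbf{u}_{x(k+1)}:=(u^\star_{x(k)}(1),\dots,u^\star_{x(k)}(N-1),\kappa(x_{\mathbf{u}^\star_{x(k)}}(N,x(k))))$. Feedback $\mu^N(k,x(k)):=u^\star_{x(k)}(0)$, $x(k+1)=f(x(k),\mu^N(k,x(k)))$, $x_\mu(k,x_0):=x(k)$. Rotated stage cost: $\widetilde\ell_1(x,u)=\ell_1(x,u)-\ell_1(x^e,u^e)+\lambda_1(x)-\lambda_1(f(x,u))$. *)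

(* Defs.v *)
From HB Require Import structures.
From mathcomp Require Import all_boot all_order all_algebra.
From mathcomp Require Import all_classical all_reals all_analysis.
Set Implicit Arguments. Unset Strict Implicit. Unset Printing Implicit Defensive.
Import Order.TTheory GRing.Theory Num.Theory.
Import numFieldNormedType.Exports.
Local Open Scope classical_set_scope.
Local Open Scope ring_scope.

Section MOC.
Variables (R : realType) (n m : nat).
Notation state := 'rV[R]_n.
Notation ctrl := 'rV[R]_m.
Variable f : state -> ctrl -> state.

Fixpoint traj (u : nat -> ctrl) (x0 : state) (k : nat) : state :=
  match k with
  | 0%N => x0
  | k'.+1 => f (traj u x0 k') (u k')
  end.

Variables (X : set state) (U : set ctrl) (X0 : set state) (N : nat).

(* U^N(x0): control sequences (only the first N entries u(0..N-1) matter) *)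
Definition admissible (x0 : state) (u : nat -> ctrl) : Prop :=
  (forall k, (k < N)%N -> U (u k)) /\
  (forall k, (1 <= k)%N -> (k <= N.-1)%N -> X (traj u x0 k)) /\
  X0 (traj u x0 N).

Definition feasible_set : set state :=
  [set x0 | X x0 /\ exists u, admissible x0 u].

Variables (s : nat) (ell : 'I_s -> state -> ctrl -> R) (F1 : state -> R).

(* J_i^N ; objective index i : 'I_s, with val i = 0 the first objective *)
Definition J (i : 'I_s) (x0 : state) (u : nat -> ctrl) : R :=
  \sum_(k < N) ell i (traj u x0 k) (u k) +
  (if val i == 0%N then F1 (traj u x0 N) else 0).

Definition efficient (x0 : state) (u : nat -> ctrl) : Prop :=
  admissible x0 u /\
  ~ (exists v, admissible x0 v /\ (forall i, J i x0 v <= J i x0 u) /\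
                 (exists i, J i x0 v < J i x0 u)).

Definition externally_stable (x0 : state) : Prop :=
  forall u, admissible x0 u ->
    exists up, efficient x0 up /\ forall i, J i x0 up <= J i x0 u.

(* u_{x(k+1)} built from u*_{x(k)} at state x(k) *)
Definition shifted_seq (kappa : state -> ctrl) (x : state) (us : nat -> ctrl)
  : nat -> ctrl :=
  fun k => if (k < N.-1)%N then us k.+1 else kappa (traj us x N).

End MOC.

Definition Kinf (R : realType) (a : R -> R) : Prop :=
  a 0 = 0 /\
  {within [set x : R | 0 <= x], continuous a} /\
  (forall x y, 0 <= x -> x < y -> a x < a y) /\
  (forall M, exists x, 0 <= x /\ M < a x) /\
  (forall x, 0 <= x -> 0 <= a x).

Definition rotated_cost (R : realType) (n m : nat)
  (f : 'rV[R]_n -> 'rV[R]_m -> 'rV[R]_n) (ell1 : 'rV[R]_n -> 'rV[R]_m -> R)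
  (lambda1 : 'rV[R]_n -> R) (xe : 'rV[R]_n) (ue : 'rV[R]_m)
  (x : 'rV[R]_n) (u : 'rV[R]_m) : R :=
  ell1 x u - ell1 xe ue + lambda1 x - lambda1 (f x u).

(* Main.v *)
Require Import Defs.
From HB Require Import structures.
From mathcomp Require Import all_boot all_order all_algebra.
From mathcomp Require Import all_classical all_reals all_analysis.
From mathcomp Require Import lra zify.
Import Order.TTheory GRing.Theory Num.Theory.
Import numFieldNormedType.Exports.
Local Open Scope classical_set_scope.
Local Open Scope ring_scope.

Theorem corollary4p3 (R : realType) (n m : nat)
  (f : 'rV[R]_n -> 'rV[R]_m -> 'rV[R]_n)
  (X : set 'rV[R]_n) (U : set 'rV[R]_m) (X0 : set 'rV[R]_n)
  (N s : nat) (ell : 'I_s -> 'rV[R]_n -> 'rV[R]_m -> R) (F1 : 'rV[R]_n -> R)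
  (hf : continuous (fun p : 'rV[R]_n * 'rV[R]_m => f p.1 p.2))
  (hX : X !=set0) (hU : U !=set0) (hX0ne : X0 !=set0) (hX0X : X0 `<=` X)
  (hN : (2 <= N)%N) (hs : (2 <= s)%N)
  (hF1c : {within X0, continuous F1}) (hF1p : forall x, X0 x -> 0 <= F1 x)
  (* Assumption A *)
  (xe : 'rV[R]_n) (ue : 'rV[R]_m) (lambda1 : 'rV[R]_n -> R) (alpha1 : R -> R)
  (kappa : 'rV[R]_n -> 'rV[R]_m)
  (i0 : 'I_s) (hi0 : val i0 = 0%N)
  (hAi : X xe /\ U ue /\ f xe ue = xe)
  (hAii : (exists c : R, forall x, X x -> c <= lambda1 x) /\ lambda1 xe = 0 /\
          Kinf alpha1 /\
          forall x u, X x -> U u ->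
            rotated_cost f (ell i0) lambda1 xe ue x u >=
              alpha1 (`|x - xe| + `|u - ue|))
  (hAiii : forall i, {within [set p | X p.1 /\ U p.2],
                       continuous (fun p : 'rV[R]_n * 'rV[R]_m => ell i p.1 p.2)})
  (hAiv : X0 xe /\ forall x, X0 x ->
            U (kappa x) /\ X0 (f x (kappa x)) /\
            F1 (f x (kappa x)) + ell i0 x (kappa x) <= F1 x + ell i0 xe ue)
  (hAv : forall x, feasible_set f X U X0 N x ->
           externally_stable f X U X0 N ell F1 x)
  (* Algorithm 1 *)
  (x0 : 'rV[R]_n) (hx0 : feasible_set f X U X0 N x0)
  (x : nat -> 'rV[R]_n) (ustar : nat -> nat -> 'rV[R]_m)
  (hx_init : x 0%N = x0)
  (hx_step : forall k, x k.+1 = f (x k) (ustar k 0%N))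
  (hu_eff : forall k, efficient f X U X0 N ell F1 (x k) (ustar k))
  (hu_J1 : forall k, (1 <= k)%N ->
     J f N ell F1 i0 (x k) (ustar k) <=
     J f N ell F1 i0 (x k) (shifted_seq f N kappa (x k.-1) (ustar k.-1))) :
  x @ \oo --> xe /\
  (fun k => rotated_cost f (ell i0) lambda1 xe ue (x k) (ustar k 0%N)) @ \oo --> 0.
Proof.
have [N' HN] : exists N', N = N'.+2 by exists N.-2; case: N hN {hu_J1 hu_eff hAv hx0} => [|[|]].
subst N.
have hif : forall b : R, (if val i0 == 0%N then b else 0) = b by move=> b; rewrite hi0.
case: hAi => Xxe [Uue fe].
case: hAii => [[c hc] [lxe [[a0 [_ [amono [_ apos]]]] hrot]]].
case: hAiv => _ hkap.
set ee := ell i0 xe ue.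
set rot := rotated_cost f (ell i0) lambda1 xe ue.
have rot_ge0 : forall y u, X y -> U u -> 0 <= rot y u.
  move=> y u Xy Uu; apply: le_trans (hrot y u Xy Uu); apply: apos.
  by rewrite addr_ge0.
have Xx : forall k, X (x k).
  elim=> [|k IH]; first by rewrite hx_init; case: hx0.
  case: (hu_eff k) => [[_ [hadm _]] _].
  by rewrite hx_step; apply: (hadm 1%N).
have adm : forall k, admissible f X U X0 N'.+2 (x k) (ustar k).
  by move=> k; case: (hu_eff k).
have ellE : forall y u, ell i0 y u = rot y u + ee - lambda1 y + lambda1 (f y u).
  by move=> y u; rewrite /rot /rotated_cost /ee; lra.
have lb : forall k K, (K <= N'.+2)%N ->
   K%:R * ee + lambda1 (traj f (ustar k) (x k) K) - lambda1 (x k) <=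
   \sum_(j < K) ell i0 (traj f (ustar k) (x k) j) (ustar k j).
  move=> k; elim=> [|K IH] HK; first by rewrite big_ord0 /= mul0r; lra.
  rewrite big_ord_recr /=.
  have := IH (ltnW HK); rewrite ellE.
  have XK : X (traj f (ustar k) (x k) K).
    case: K {IH} HK => [|K] HK; first exact: Xx.
    by case: (adm k) => [_ [h _]]; apply: h => //; rewrite /=; lia.
  have UK : U (ustar k K) by case: (adm k) => [h _]; apply: h.
  have := rot_ge0 _ _ XK UK.
  rewrite -natr1 mulrDl mul1r.
  lra.
set W := fun k => J f N'.+2 ell F1 i0 (x k) (ustar k) + lambda1 (x k).
have Wlb : forall k, N'.+2%:R * ee + c <= W k.
  move=> k; rewrite /W /J hif.
  have := lb k N'.+2 (leqnn _).
  have XN : X0 (traj f (ustar k) (x k) N'.+2) by case: (adm k) => [_ [_ h]].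
  have := hc _ (hX0X _ XN); have := hF1p _ XN.
  lra.
have shiftE : forall k j, (j <= N'.+1)%N ->
   traj f (shifted_seq f N'.+2 kappa (x k) (ustar k)) (x k.+1) j =
   traj f (ustar k) (x k) j.+1.
  move=> k; elim=> [|j IH] Hj; first by rewrite /= hx_step.
  rewrite /= IH ?(ltnW Hj) //= /shifted_seq /=.
  by rewrite Hj.
have dec : forall k, W k.+1 + rot (x k) (ustar k 0%N) <= W k.
  move=> k; have := hu_J1 k.+1 isT; rewrite /= /W /J !hif.
  set u' := shifted_seq _ _ _ _ _.
  set z := traj f (ustar k) (x k) N'.+2.
  have Xz : X0 z by case: (adm k) => [_ [_ h]].
  case: (hkap z Xz) => _ [_ hk].
  have Hs : \sum_(j < N'.+2) ell i0 (traj f u' (x k.+1) j) (u' j) =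
    \sum_(j < N'.+1) ell i0 (traj f (ustar k) (x k) j.+1) (ustar k j.+1) +
    ell i0 z (kappa z).
    rewrite big_ord_recr /=; congr (_ + _).
      apply: eq_bigr => j _; rewrite shiftE 1?ltnW //.
      by rewrite /u' /shifted_seq /= ltn_ord.
    by rewrite shiftE // /u' /shifted_seq -[N'.+2.-1]/(N'.+1) ltnSn ltnn.
  have HF : traj f u' (x k.+1) N'.+2 = f z (kappa z).
    by rewrite [LHS]/= shiftE // /u' /shifted_seq -[N'.+2.-1]/(N'.+1) ltnSn ltnn.
  have Hs0 : \sum_(j < N'.+2) ell i0 (traj f (ustar k) (x k) j) (ustar k j) =
    ell i0 (x k) (ustar k 0%N) +
    \sum_(j < N'.+1) ell i0 (traj f (ustar k) (x k) j.+1) (ustar k j.+1).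
    by rewrite big_ord_recl /=.
  rewrite Hs HF Hs0 -/z.
  rewrite /rot /rotated_cost -/ee -hx_step.
  move: hk; rewrite -/ee; lra.
set r := fun k => rot (x k) (ustar k 0%N).
have r0 : forall k, 0 <= r k.
  move=> k; apply: rot_ge0 => //; by case: (adm k) => [h _]; apply: h.
have psum : forall K, \sum_(j < K) r j <= W 0%N - W K.
  elim=> [|K IH]; first by rewrite big_ord0 subrr.
  rewrite big_ord_recr /=; have := dec K; rewrite -/(r K); lra.
have rcvg : r @ \oo --> 0.
  apply: cvg_series_cvg_0; apply: nondecreasing_is_cvgn.
    move=> a b hab; rewrite /series /=.
    by apply: (nondecreasing_series (fun n _ _ => r0 n)).
  exists (W 0%N - (N'.+2%:R * ee + c)) => _ [K _ <-].
  rewrite /series /= big_mkord.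
  have := psum K; have := Wlb K; lra.
have amon : forall a b, 0 <= a -> a <= b -> alpha1 a <= alpha1 b.
  move=> a b ha; rewrite le_eqVlt => /orP [/eqP -> //| hab].
  exact: ltW (amono _ _ ha hab).
split; last exact: rcvg.
apply/cvgrPdist_lt => e e0.
have ae : 0 < alpha1 e by rewrite -a0; apply: amono.
move/cvgrPdist_lt: rcvg => /(_ _ ae).
apply: filterS => k.
rewrite sub0r normrN => hk.
rewrite distrC ltNge; apply/negP => hle.
have hr := hrot (x k) (ustar k 0%N) (Xx k).
have : U (ustar k 0%N) by case: (adm k) => [h _]; apply: h.
move=> /hr {}hr.
have h1 : alpha1 e <= alpha1 (`|x k - xe| + `|ustar k 0%N - ue|).
  apply: amon; first exact: ltW.
  apply: le_trans hle _; rewrite lerDl; exact: normr_ge0.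
have := ger0_norm (r0 k); rewrite /r => hn.
move: hk; rewrite /r hn => hk.
move: hk; rewrite /rot => hk; have := le_trans h1 hr; lra.
Qed.
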